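(* For every integer $m\ge2$, $$S_m^2<S_{m+1}S_{m-1}<\Big(1+\frac{1}{m(m-1)}\Big)S_m^2.$$
   Context: $(S_n)_{n\ge0}$ is the integer sequence defined by $S_0=1$, $S_1=4$ and $(n+1)^2S_{n+1}=4(3n^2+3n+1)S_n-32n^2S_{n-1}$ for $n\ge1$; equivalently $S_n=\sum_{k=0}^n\binom nk\binom{2k}k\binom{2n-2k}{n-k}$. *)

(* Defs.v *)
From mathcomp Require Import all_boot all_order all_algebra.
Set Implicit Arguments. Unset Strict Implicit. Unset Printing Implicit Defensive.

Definition S (n : nat) : nat :=
  \sum_(0 <= k < n.+1) 'C(n, k) * 'C(2 * k, k) * 'C(2 * n - 2 * k, n - k).

(* Main.v *)
Require Import Defs.
From mathcomp Require Import all_boot all_order all_algebra.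
From mathcomp Require Import zify ring lra.
Import Order.TTheory GRing.Theory Num.Theory.
Local Open Scope ring_scope.

Definition c (m : nat) : nat := 'C(2 * m, m).
Definition T (n k : nat) : nat := 'C(n, k) * 'C(2 * k, k) * 'C(2 * n - 2 * k, n - k).

Lemma Tab a b : T (a + b) a = ('C(a + b, a) * c a * c b)%N.
Proof. by rewrite /T /c mulnDr addKn addKn. Qed.

Lemma R1 a b : ('C((a + b).+1, a) * b.+1 = (a + b).+1 * 'C(a + b, a))%N.
Proof.
have := mul_bin_down (a + b).+1 a; rewrite /= => ->.
have -> : ((a + b).+1 - a = b.+1)%N by lia.
by rewrite mulnC.
Qed.

Lemma R2 a b : ('C((a + b).+1, a.+1) * a.+1 = (a + b).+1 * 'C(a + b, a))%N.
Proof. by have := mul_bin_diag (a + b).+1 a; rewrite /= => ->; rewrite mulnC. Qed.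

Lemma cS b : (c b.+1 * b.+1 = 2 * (2 * b + 1) * c b)%N.
Proof.
rewrite /c.
have h1 := mul_bin_diag (2 * b.+1) b.
have h2 := mul_bin_diag (2 * b).+1 b.
have e1 : (2 * b.+1).-1 = (2 * b).+1 by lia.
rewrite e1 in h1; rewrite /= in h2.
have e2 : 'C((2 * b).+1, b.+1) = 'C((2 * b).+1, b).
  rewrite -bin_sub; last by lia.
  by have -> : ((2 * b).+1 - b.+1 = b)%N by lia.
rewrite e2 in h2.
set X := 'C(2 * b.+1, b.+1) in h1 *. set Y := 'C(2 * b, b) in h2 *. set Z := 'C((2 * b).+1, b) in h1 h2.
have h : (b.+1 * (X * b.+1) = b.+1 * (2 * (2 * b + 1) * Y))%N by nia.
by apply/eqP; rewrite -(eqn_pmul2l (ltn0Sn b)); apply/eqP.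
Qed.

Ltac nzq := repeat (apply/andP; split); first [apply: lt0r_neq0; lra | apply: ltr0_neq0; lra].

Definition Tq (n k : nat) : rat := (T n k)%:R.

Lemma solve {x d e : rat} : d != 0 -> x * d = e -> x = e / d.
Proof. by move=> hd <-; rewrite mulfK. Qed.

Lemma natq {m n : nat} : (m = n)%N -> (m%:R : rat) = n%:R.
Proof. by move=> ->. Qed.

Lemma nz (n : nat) : (n.+1%:R : rat) != 0.
Proof. by rewrite pnatr_eq0. Qed.

Lemma L2 a b : Tq (a + b.+1).+1 a =
  ((a + b.+1).+1%:R * 'C(a + b.+1, a)%:R / b.+2%:R) * (c a)%:R *
  ((2 * (2 * b.+1 + 1))%:R * (c b.+1)%:R / b.+2%:R).
Proof.
rewrite /Tq -addnS Tab !natrM.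
have h := natq (R1 a b.+1); rewrite -addnS !natrM in h.
have k := natq (cS b.+1); rewrite !natrM in k.
rewrite (solve (nz _) h) (solve (nz _) k).
by rewrite ?(natrD, natrM, addnS, addSn).
Qed.

Lemma L3 a b : Tq (a + b.+1).+1 a.+1 =
  ((a + b.+1).+1%:R * 'C(a + b.+1, a)%:R / a.+1%:R) *
  ((2 * (2 * a + 1))%:R * (c a)%:R / a.+1%:R) * (c b.+1)%:R.
Proof.
rewrite /Tq -addSn Tab !natrM.
have h := natq (R2 a b.+1); rewrite -addSn !natrM in h.
have k := natq (cS a); rewrite !natrM in k.
rewrite (solve (nz _) h) (solve (nz _) k).
by rewrite ?(natrD, natrM, addnS, addSn).
Qed.

Lemma L4 a b : Tq (a + b) a =
  (b.+1%:R * 'C(a + b.+1, a)%:R / (a + b).+1%:R) * (c a)%:R *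
  (b.+1%:R * (c b.+1)%:R / (2 * (2 * b + 1))%:R).
Proof.
rewrite /Tq Tab !natrM.
have h := natq (R1 a b); rewrite -addnS in h; rewrite !natrM in h; symmetry in h; rewrite [X in X = _]mulrC in h.
have k := natq (cS b); rewrite !natrM in k; symmetry in k; rewrite [X in X = _]mulrC in k.
rewrite (solve _ h); last by rewrite addnS nz.
rewrite (solve _ k); last by rewrite mulf_neq0 // pnatr_eq0 addn1.
move: (c a) (c b.+1) ('C(a + b.+1, a)) => x y z.
rewrite -?natr1 ?(natrD, natrM, addnS, addSn) -?natr1 ?natrD. field. have := ler0n rat a; have := ler0n rat b => ? ?; nzq.
Qed.

Definition G (n j : nat) : rat := Tq n.+1 j * (j%:R) ^+ 2 *
  (1 - n%:R - 2 * n%:R * (n%:R - j%:R)) / ((n%:R + 1) * (2 * n%:R - 2 * j%:R + 1)).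

Definition LHSq (n k : nat) : rat :=
  (n.+1%:R) ^+ 2 * Tq n.+1 k - 4 * (3 * n%:R ^+ 2 + 3 * n%:R + 1) * Tq n k
  + 32 * n%:R ^+ 2 * Tq n.-1 k.

Lemma pw_ab a b : LHSq (a + b.+1) a = G (a + b.+1) a.+1 - G (a + b.+1) a.
Proof.
rewrite /LHSq /G.
have -> : (a + b.+1).-1 = (a + b)%N by rewrite addnS.
rewrite L2 L3 (L4 a b) /Tq (Tab a b.+1) !natrM.
move: (c a) (c b.+1) ('C(a + b.+1, a)) => x y z.
rewrite -?natr1 ?(natrD, natrM) -?natr1 ?natrD.
have := ler0n rat a; have := ler0n rat b => ? ?.
field; nzq.
Qed.

Lemma pw_b0 a : LHSq a a = G a a.+1 - G a a.
Proof.
rewrite /LHSq /G.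
have -> : 32 * a%:R ^+ 2 * Tq a.-1 a = 0.
  case: a => [|a']; first by rewrite mulr0n expr0n /= mulr0 mul0r.
  by rewrite /Tq /T /= bin_small // !mul0n mulr0.
have e1 : T a.+1 a = (a.+1 * c a * 2)%N.
  by have := Tab a 1; rewrite addn1 binSn => ->.
have e2 : T a a = c a.
  by have := Tab a 0; rewrite addn0 binn mul1n muln1 => ->.
have e3 : T a.+1 a.+1 = c a.+1.
  by have := Tab a.+1 0; rewrite addn0 binn mul1n muln1 => ->.
have k := natq (cS a); rewrite !natrM in k.
rewrite /Tq e1 e2 e3 (solve (nz _) k) !natrM.
move: (c a) => x.
rewrite -?natr1 ?(natrD, natrM) -?natr1 ?natrD.
have := ler0n rat a => ?.
field; nzq.
Qed.

Lemma pw_top n : LHSq n n.+1 = G n n.+2 - G n n.+1.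
Proof.
rewrite /LHSq /G.
have z1 : Tq n n.+1 = 0 by rewrite /Tq /T bin_small.
have z2 : Tq n.-1 n.+1 = 0 by rewrite /Tq /T bin_small //; case: (n) => [|m].
have z3 : Tq n.+1 n.+2 = 0 by rewrite /Tq /T bin_small.
have e3 : T n.+1 n.+1 = c n.+1.
  by have := Tab n.+1 0; rewrite addn0 binn mul1n muln1 => ->.
rewrite z1 z2 z3 /Tq e3.
move: (c n.+1) => x.
rewrite -?natr1 ?(natrD, natrM) -?natr1 ?natrD.
have := ler0n rat n => ?.
field; nzq.
Qed.

Lemma pw n k : (k <= n.+1)%N -> LHSq n k = G n k.+1 - G n k.
Proof.
rewrite leq_eqVlt => /orP [/eqP -> | ]; first exact: pw_top.
rewrite ltnS => hk.
have [b hb] : exists b, n = (k + b)%N by exists (n - k)%N; lia.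
rewrite hb; case: b {hb} => [|b]; first by rewrite addn0; exact: pw_b0.
exact: pw_ab.
Qed.

Definition Sq (n : nat) : rat := (S n)%:R.

Lemma SqE n : Sq n = \sum_(0 <= k < n.+1) Tq n k.
Proof. by rewrite /Sq /S natr_sum. Qed.

Lemma rec n : (n.+2%:R) ^+ 2 * Sq n.+2 =
  4 * (3 * n.+1%:R ^+ 2 + 3 * n.+1%:R + 1) * Sq n.+1 - 32 * n.+1%:R ^+ 2 * Sq n.
Proof.
have hs : \sum_(0 <= k < n.+3) LHSq n.+1 k = 0.
  rewrite (eq_big_nat _ _ (F2 := fun k => G n.+1 k.+1 - G n.+1 k)); last first.
    by move=> k /andP [_ hk]; apply: pw.
  rewrite telescope_sumr // /G.
  have z : Tq n.+2 n.+3 = 0 by rewrite /Tq /T bin_small.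
  by rewrite z mulr0n expr0n /= !(mulr0, mul0r) subrr.
have e1 : \sum_(0 <= k < n.+3) Tq n.+1 k = Sq n.+1.
  have z : Tq n.+1 n.+2 = 0 by rewrite /Tq /T bin_small.
  by rewrite SqE big_nat_recr //= z addr0.
have e2 : \sum_(0 <= k < n.+3) Tq n k = Sq n.
  have z1 : Tq n n.+1 = 0 by rewrite /Tq /T bin_small.
  have z2 : Tq n n.+2 = 0 by rewrite /Tq /T bin_small.
  by rewrite SqE big_nat_recr // big_nat_recr //= z1 z2 !addr0.
move: hs; rewrite /LHSq big_split /= sumrB -!mulr_sumr.
rewrite -SqE e1 e2 /= => hs.
apply/eqP; rewrite -subr_eq0; apply/eqP; rewrite -hs; ring.
Qed.

Lemma recE n : Sq n.+2 =
  (4 * (3 * n.+1%:R ^+ 2 + 3 * n.+1%:R + 1) * Sq n.+1 - 32 * n.+1%:R ^+ 2 * Sq n) / (n.+2%:R) ^+ 2.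
Proof. by rewrite -rec [_ ^+ 2 * Sq _]mulrC mulfK // expf_neq0 // nz. Qed.

Lemma Sq0 : Sq 0 = 1. Proof. by rewrite /Sq /S big_nat1. Qed.
Lemma S1 : S 1 = 4%N. Proof. by rewrite /S !big_nat_recr //= big_nil. Qed.
Lemma Sq1 : Sq 1 = 4. Proof. by rewrite /Sq S1. Qed.
Lemma Sq2 : Sq 2 = 20. Proof. by rewrite recE Sq1 Sq0; vm_compute; reflexivity. Qed.
Lemma Sq3 : Sq 3 = 112. Proof. by rewrite recE Sq2 Sq1; field. Qed.
Lemma Sq4 : Sq 4 = 676. Proof. by rewrite recE Sq3 Sq2; field. Qed.
Lemma Sq5 : Sq 5 = 4304. Proof. by rewrite recE Sq4 Sq3; field. Qed.
Lemma Sq6 : Sq 6 = 28 * 1000 + 496. Proof. by rewrite recE Sq5 Sq4; field. Qed.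
Lemma Sq7 : Sq 7 = 194 * 1000 + 240. Proof. by rewrite recE Sq6 Sq5; field. Qed.
Lemma Sq8 : Sq 8 = (1353 * 1000 + 508). Proof. by rewrite recE Sq7 Sq6; field. Qed.
Lemma Sq9 : Sq 9 = (9593 * 1000 + 104). Proof. by rewrite recE Sq8 Sq7; field. Qed.

Lemma up_step (N A B C : rat) : 5 <= N -> 0 < A -> 0 < B ->
  (N + 1) ^+ 2 * C = 4 * (3 * N ^+ 2 + 3 * N + 1) * A - 32 * N ^+ 2 * B ->
  N * A <= 8 * (N - 1) * B -> (N + 1) * C <= 8 * N * A.
Proof.
move=> hN hA hB hC hI.
have hX : 0 <= 32 * N ^+ 2 * B - 4 * (N ^+ 2 + N + 1) * A.
  have h1 : 0 <= N ^+ 2 * (8 * (N - 1) * B - N * A).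
    apply: mulr_ge0; [by apply: sqr_ge0 | lra].
  have h2 : (N - 1) * (32 * N ^+ 2 * B - 4 * (N ^+ 2 + N + 1) * A) =
            4 * (N ^+ 2 * (8 * (N - 1) * B - N * A)) + 4 * A by ring.
  have h3 : 0 < N - 1 by lra.
  have h4 : 0 <= (N - 1) * (32 * N ^+ 2 * B - 4 * (N ^+ 2 + N + 1) * A) by lra.
  by rewrite pmulr_rge0 in h4.
have hN1 : 0 < N + 1 by lra.
rewrite -(ler_pM2l hN1) mulrA -expr2 hC.
have -> : (N + 1) * (8 * N * A) = 8 * N * A + 8 * N ^+ 2 * A by ring.
have -> : 4 * (3 * N ^+ 2 + 3 * N + 1) * A - 32 * N ^+ 2 * B =
   8 * N * A + 8 * N ^+ 2 * A - (32 * N ^+ 2 * B - 4 * (N ^+ 2 + N + 1) * A) by ring.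
lra.
Qed.
Definition PLP (m : rat) : rat := (- 480) + (- 160) * m + (- 352) * m ^+ 2 + 48 * m ^+ 3.
Lemma PL_pos (m : rat) : 8 <= m -> 0 < PLP m.
Proof.
move=> hm; have hk : 0 <= m - 8 by lra.
have -> : PLP m = 288 + 3424 * (m - 8) + 800 * (m - 8) ^+ 2 + 48 * (m - 8) ^+ 3 by rewrite /PLP; ring.
have h1 : 0 <= (m - 8) ^+ 1 by apply: exprn_ge0. have h2 : 0 <= (m - 8) ^+ 2 by apply: exprn_ge0. have h3 : 0 <= (m - 8) ^+ 3 by apply: exprn_ge0.
lra.
Qed.

Definition nalP (m : rat) : rat := (- 64) * m ^+ 3 + (- 32) * m ^+ 4 + 64 * m ^+ 5.
Lemma nal_pos (m : rat) : 8 <= m -> 0 < nalP m.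
Proof.
move=> hm; have hk : 0 <= m - 8 by lra.
have -> : nalP m = ((1 * 1000 + 933) * 1000 + 312) + ((1 * 1000 + 232) * 1000 + 896) * (m - 8) + (313 * 1000 + 856) * (m - 8) ^+ 2 + (39 * 1000 + 872) * (m - 8) ^+ 3 + 2528 * (m - 8) ^+ 4 + 64 * (m - 8) ^+ 5 by rewrite /nalP; ring.
have h1 : 0 <= (m - 8) ^+ 1 by apply: exprn_ge0. have h2 : 0 <= (m - 8) ^+ 2 by apply: exprn_ge0. have h3 : 0 <= (m - 8) ^+ 3 by apply: exprn_ge0. have h4 : 0 <= (m - 8) ^+ 4 by apply: exprn_ge0. have h5 : 0 <= (m - 8) ^+ 5 by apply: exprn_ge0.
lra.
Qed.

Definition nbeP (m : rat) : rat := (- 400) * m + (- 800) * m ^+ 2 + (- 720) * m ^+ 3 + (- 400) * m ^+ 4 + 16 * m ^+ 5 + 48 * m ^+ 6 + 64 * m ^+ 7.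
Lemma nbe_pos (m : rat) : 8 <= m -> 0 < nbeP m.
Proof.
move=> hm; have hk : 0 <= m - 8 by lra.
have -> : nbeP m = ((145 * 1000 + 263) * 1000 + 488) + ((126 * 1000 + 234) * 1000 + 736) * (m - 8) + ((46 * 1000 + 899) * 1000 + 552) * (m - 8) ^+ 2 + ((9 * 1000 + 663) * 1000 + 280) * (m - 8) ^+ 3 + ((1 * 1000 + 193) * 1000 + 200) * (m - 8) ^+ 4 + (88 * 1000 + 336) * (m - 8) ^+ 5 + 3632 * (m - 8) ^+ 6 + 64 * (m - 8) ^+ 7 by rewrite /nbeP; ring.
have h1 : 0 <= (m - 8) ^+ 1 by apply: exprn_ge0. have h2 : 0 <= (m - 8) ^+ 2 by apply: exprn_ge0. have h3 : 0 <= (m - 8) ^+ 3 by apply: exprn_ge0. have h4 : 0 <= (m - 8) ^+ 4 by apply: exprn_ge0. have h5 : 0 <= (m - 8) ^+ 5 by apply: exprn_ge0. have h6 : 0 <= (m - 8) ^+ 6 by apply: exprn_ge0. have h7 : 0 <= (m - 8) ^+ 7 by apply: exprn_ge0.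
lra.
Qed.

Definition betaP (m : rat) : rat := (- 40) + (- 40) * m + (- 16) * m ^+ 2 + (- 40) * m ^+ 3 + (- 20) * m ^+ 4 + (- 8) * m ^+ 5 + 4 * m ^+ 7.
Lemma beta_pos (m : rat) : 8 <= m -> 0 < betaP m.
Proof.
move=> hm; have hk : 0 <= m - 8 by lra.
have -> : betaP m = ((8 * 1000 + 22) * 1000 + 680) + ((7 * 1000 + 127) * 1000 + 256) * (m - 8) + ((2 * 1000 + 702) * 1000 + 896) * (m - 8) ^+ 2 + (567 * 1000 + 640) * (m - 8) ^+ 3 + (71 * 1000 + 340) * (m - 8) ^+ 4 + (5 * 1000 + 368) * (m - 8) ^+ 5 + 224 * (m - 8) ^+ 6 + 4 * (m - 8) ^+ 7 by rewrite /betaP; ring.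
have h1 : 0 <= (m - 8) ^+ 1 by apply: exprn_ge0. have h2 : 0 <= (m - 8) ^+ 2 by apply: exprn_ge0. have h3 : 0 <= (m - 8) ^+ 3 by apply: exprn_ge0. have h4 : 0 <= (m - 8) ^+ 4 by apply: exprn_ge0. have h5 : 0 <= (m - 8) ^+ 5 by apply: exprn_ge0. have h6 : 0 <= (m - 8) ^+ 6 by apply: exprn_ge0. have h7 : 0 <= (m - 8) ^+ 7 by apply: exprn_ge0.
lra.
Qed.

Definition gammaP (m : rat) : rat := 400 + 400 * m + 320 * m ^+ 2 + 400 * m ^+ 3 + 64 * m ^+ 4 + 96 * m ^+ 5 + (- 96) * m ^+ 6 + 16 * m ^+ 7.
Lemma gamma_pos (m : rat) : 8 <= m -> 0 < gammaP m.
Proof.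
move=> hm; have hk : 0 <= m - 8 by lra.
have -> : gammaP m = ((12 * 1000 + 25) * 1000 + 360) + ((12 * 1000 + 665) * 1000 + 232) * (m - 8) + ((5 * 1000 + 637) * 1000 + 824) * (m - 8) ^+ 2 + ((1 * 1000 + 374) * 1000 + 608) * (m - 8) ^+ 3 + (198 * 1000 + 464) * (m - 8) ^+ 4 + (16 * 1000 + 992) * (m - 8) ^+ 5 + 800 * (m - 8) ^+ 6 + 16 * (m - 8) ^+ 7 by rewrite /gammaP; ring.
have h1 : 0 <= (m - 8) ^+ 1 by apply: exprn_ge0. have h2 : 0 <= (m - 8) ^+ 2 by apply: exprn_ge0. have h3 : 0 <= (m - 8) ^+ 3 by apply: exprn_ge0. have h4 : 0 <= (m - 8) ^+ 4 by apply: exprn_ge0. have h5 : 0 <= (m - 8) ^+ 5 by apply: exprn_ge0. have h6 : 0 <= (m - 8) ^+ 6 by apply: exprn_ge0. have h7 : 0 <= (m - 8) ^+ 7 by apply: exprn_ge0.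
lra.
Qed.



Lemma low_step (N A B C : rat) : 8 <= N -> 0 < A -> 0 < B ->
  (N + 1) ^+ 2 * C = 4 * (3 * N ^+ 2 + 3 * N + 1) * A - 32 * N ^+ 2 * B ->
  (8 * N ^+ 3 - 8 * N ^+ 2 - 20) * B <= N ^+ 3 * A ->
  (8 * (N + 1) ^+ 3 - 8 * (N + 1) ^+ 2 - 20) * A <= (N + 1) ^+ 3 * C.
Proof.
move=> hN hA hB hC hI.
have hp : 0 < 8 * N ^+ 3 - 8 * N ^+ 2 - 20.
  have h1 : 0 <= (N - 8) * (N + 8) by apply: mulr_ge0; clear -hN; lra.
  have h2 : 0 <= (N ^+ 2 - 64) * (N - 1) by apply: mulr_ge0; clear -hN h1; lra.
  clear -h2 hN; lra.
have hPL := PL_pos N hN.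
have e : (8 * N ^+ 3 - 8 * N ^+ 2 - 20) *
   ((N + 1) ^+ 3 * C - (8 * (N + 1) ^+ 3 - 8 * (N + 1) ^+ 2 - 20) * A) =
   A * PLP N +
   32 * N ^+ 2 * (N + 1) * (N ^+ 3 * A - (8 * N ^+ 3 - 8 * N ^+ 2 - 20) * B).
  have -> : (N + 1) ^+ 3 * C = (N + 1) * ((N + 1) ^+ 2 * C) by ring.
  rewrite hC /PLP; ring.
have h0 : 0 <= A * PLP N +
   32 * N ^+ 2 * (N + 1) * (N ^+ 3 * A - (8 * N ^+ 3 - 8 * N ^+ 2 - 20) * B).
  clear e hC; apply: addr_ge0; first by apply: mulr_ge0; apply: ltW.
  have q1 : 0 <= N ^+ 3 * A - (8 * N ^+ 3 - 8 * N ^+ 2 - 20) * B by rewrite subr_ge0.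
  have q3 : 0 <= N ^+ 2 := sqr_ge0 N.
  have q2 : 0 <= 32 * N ^+ 2 * (N + 1).
    apply: mulr_ge0; last by clear -hN; lra.
    by apply: mulr_ge0.
  exact: mulr_ge0.
have h1 : 0 <= (N + 1) ^+ 3 * C - (8 * (N + 1) ^+ 3 - 8 * (N + 1) ^+ 2 - 20) * A.
  by rewrite -(pmulr_rge0 _ hp) e.
by rewrite subr_ge0 in h1.
Qed.


Lemma addgt0 {x y : rat} : 0 <= x -> 0 < y -> 0 < x + y.
Proof. move=> *; lra. Qed.
Lemma addgt0' {x y : rat} : 0 < x -> 0 <= y -> 0 < x + y.
Proof. move=> *; lra. Qed.

Lemma final1 (m A B C : rat) : 8 <= m -> 0 < A -> 0 < B ->
  (m + 1) ^+ 2 * C = 4 * (3 * m ^+ 2 + 3 * m + 1) * A - 32 * m ^+ 2 * B ->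
  (8 * m ^+ 3 - 8 * m ^+ 2 - 20) * B <= m ^+ 3 * A ->
  m * A <= 8 * (m - 1) * B -> A ^+ 2 < C * B.
Proof.
move=> hm hA hB hC hl hu.
have hm1 : (m + 1) ^+ 2 != 0 by apply: lt0r_neq0; apply: exprn_gt0; clear -hm; lra.
have hC' := solve hm1 (etrans (mulrC _ _) hC).
have hal := nal_pos m hm; have hbe := nbe_pos m hm.
have e : 20 * m ^+ 5 * ((m + 1) ^+ 2 * (C * B - A ^+ 2)) =
  20 * m * (m + 1) ^+ 2 * (m ^+ 3 * A - (8 * m ^+ 3 - 8 * m ^+ 2 - 20) * B)
    * (8 * (m - 1) * B - m * A)
  + B * (nalP m * (m ^+ 3 * A - (8 * m ^+ 3 - 8 * m ^+ 2 - 20) * B)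
       + nbeP m * (8 * (m - 1) * B - m * A)).
  rewrite hC' /nalP /nbeP; field; clear -hm; apply: lt0r_neq0; lra.
have hl0 : 0 <= m ^+ 3 * A - (8 * m ^+ 3 - 8 * m ^+ 2 - 20) * B by rewrite subr_ge0.
have hu0 : 0 <= 8 * (m - 1) * B - m * A by rewrite subr_ge0.
have hlu : (m ^+ 3 * A - (8 * m ^+ 3 - 8 * m ^+ 2 - 20) * B) + m ^+ 2 * (8 * (m - 1) * B - m * A) = 20 * B by ring.
move: (m ^+ 3 * A - (8 * m ^+ 3 - 8 * m ^+ 2 - 20) * B) (8 * (m - 1) * B - m * A) hl0 hu0 hlu e
  => l u hl0 hu0 hlu e.
move: (nalP m) (nbeP m) hal hbe e => X Y hal hbe e.
have hm0 : 0 < m by clear -hm; lra.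
have h20 : 0 <= 20 * m * (m + 1) ^+ 2.
  apply: mulr_ge0; [clear -hm; lra | exact: sqr_ge0].
have t1 : 0 <= 20 * m * (m + 1) ^+ 2 * l * u := mulr_ge0 (mulr_ge0 h20 hl0) hu0.
have key : 0 < 20 * m ^+ 5 * ((m + 1) ^+ 2 * (C * B - A ^+ 2)).
  rewrite e; apply: (addgt0 t1); apply: (mulr_gt0 hB).
  case: (ltrP 0 l) => hl1.
    exact: (addgt0' (mulr_gt0 hal hl1) (mulr_ge0 (ltW hbe) hu0)).
  have hl2 : l = 0 by apply/eqP; rewrite eq_le hl1 hl0.
  rewrite hl2 in hlu *; rewrite add0r in hlu; rewrite mulr0 add0r.
  have hm2 : 0 < m ^+ 2 := exprn_gt0 2 hm0.
  have : 0 < m ^+ 2 * u by rewrite hlu; apply: mulr_gt0; [clear; lra | exact: hB].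
  rewrite (pmulr_rgt0 _ hm2) => hu1.
  exact: mulr_gt0.
have h5 : 0 < 20 * m ^+ 5 by apply: mulr_gt0; [clear; lra | exact: exprn_gt0].
have h6 : 0 < (m + 1) ^+ 2 by apply: exprn_gt0; clear -hm; lra.
rewrite (pmulr_rgt0 _ h5) (pmulr_rgt0 _ h6) in key.
by rewrite subr_gt0 in key.
Qed.

Lemma final2 (m A B C : rat) : 8 <= m -> 0 < A -> 0 < B ->
  (m + 1) ^+ 2 * C = 4 * (3 * m ^+ 2 + 3 * m + 1) * A - 32 * m ^+ 2 * B ->
  (8 * m ^+ 3 - 8 * m ^+ 2 - 20) * B <= m ^+ 3 * A ->
  C * B < (1 + 1 / (m * (m - 1))) * A ^+ 2.
Proof.
move=> hm hA hB hC hl.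
have hm1 : (m + 1) ^+ 2 != 0 by apply: lt0r_neq0; apply: exprn_gt0; clear -hm; lra.
have hC' := solve hm1 (etrans (mulrC _ _) hC).
have hbeta := beta_pos m hm; have hgamma := gamma_pos m hm.
have e : m ^+ 6 * (m * (m - 1) * (m + 1) ^+ 2 * ((1 + 1 / (m * (m - 1))) * A ^+ 2 - C * B)) =
  (1 + m + m ^+ 3 + m ^+ 4) * (m ^+ 3 * A - (8 * m ^+ 3 - 8 * m ^+ 2 - 20) * B) ^+ 2
  + betaP m * (m ^+ 3 * A - (8 * m ^+ 3 - 8 * m ^+ 2 - 20) * B) * B
  + gammaP m * B ^+ 2.
  rewrite hC' /betaP /gammaP; field; clear -hm; rewrite ?negb_or; repeat (apply/andP; split); apply: lt0r_neq0; lra.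
have hl0 : 0 <= m ^+ 3 * A - (8 * m ^+ 3 - 8 * m ^+ 2 - 20) * B by rewrite subr_ge0.
move: (m ^+ 3 * A - (8 * m ^+ 3 - 8 * m ^+ 2 - 20) * B) hl0 e => l hl0 e.
move: (betaP m) (gammaP m) hbeta hgamma e => X Y hbeta hgamma e.
have hm0 : 0 < m by clear -hm; lra.
have hl2 : 0 <= l ^+ 2 := sqr_ge0 l.
have ha2 : 0 <= 1 + m + m ^+ 3 + m ^+ 4.
  have : 0 <= m ^+ 3 := exprn_ge0 3 (ltW hm0).
  have : 0 <= m ^+ 4 := exprn_ge0 4 (ltW hm0).
  clear -hm0; move=> *; lra.
have hB2 : 0 < B ^+ 2 := exprn_gt0 2 hB.
have key : 0 < m ^+ 6 * (m * (m - 1) * (m + 1) ^+ 2 * ((1 + 1 / (m * (m - 1))) * A ^+ 2 - C * B)).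
  rewrite e; apply: (addgt0 _ (mulr_gt0 hgamma hB2)).
  exact: (addr_ge0 (mulr_ge0 ha2 hl2) (mulr_ge0 (mulr_ge0 (ltW hbeta) hl0) (ltW hB))).
have h5 : 0 < m ^+ 6 := exprn_gt0 6 hm0.
have h6 : 0 < m * (m - 1) * (m + 1) ^+ 2.
  apply: mulr_gt0; [apply: (mulr_gt0 hm0); clear -hm; lra | apply: exprn_gt0; clear -hm; lra].
rewrite (pmulr_rgt0 _ h5) (pmulr_rgt0 _ h6) in key.
by rewrite subr_gt0 in key.
Qed.

Lemma Sq_pos n : 0 < Sq n.
Proof.
rewrite /Sq ltr0n /S big_ltn // addn_gt0; apply/orP; left.
rewrite bin0 muln0 mul1n subn0 bin0 mul1n subn0 bin_gt0; lia.
Qed.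

Lemma ge5 k : (5 : rat) <= k.+4.+1%:R.
Proof. have := ler0n rat k; rewrite -!natr1; lra. Qed.
Lemma ge8 k : (8 : rat) <= k.+4.+4%:R.
Proof. have := ler0n rat k; rewrite -!natr1; lra. Qed.

Lemma upper k : k.+4.+1%:R * Sq k.+4.+1 <= 8 * (k.+4.+1%:R - 1) * Sq k.+4.
Proof.
elim: k => [|k IH]; first by rewrite Sq5 Sq4; lra.
have e6 : (k.+4.+2%:R : rat) = k.+4.+1%:R + 1 by rewrite natr1.
have hrec := rec k.+4; rewrite e6 in hrec.
rewrite e6 addrK.
exact: (up_step _ _ _ _ (ge5 k) (Sq_pos _) (Sq_pos _) hrec IH).
Qed.

Lemma lower k : (8 * k.+4.+4%:R ^+ 3 - 8 * k.+4.+4%:R ^+ 2 - 20) * Sq k.+4.+3 <= k.+4.+4%:R ^+ 3 * Sq k.+4.+4.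
Proof.
elim: k => [|k IH]; first by rewrite Sq8 Sq7; lra.
have e9 : (k.+4.+4.+1%:R : rat) = k.+4.+4%:R + 1 by rewrite natr1.
have hrec := rec k.+4.+3; rewrite e9 in hrec.
rewrite e9.
exact: (low_step _ _ _ _ (ge8 k) (Sq_pos _) (Sq_pos _) hrec IH).
Qed.

Lemma main' (m : nat) (hm : (2 <= m)%N) :
  (Sq m ^+ 2 < Sq m.+1 * Sq m.-1) /\
  (Sq m.+1 * Sq m.-1 < (1 + 1 / (m%:R * (m%:R - 1))) * Sq m ^+ 2).
Proof.
case: m hm => [|[|m]] hm; [by [] | by [] | clear hm].
case: m => [|[|[|[|[|[|k]]]]]].
- have -> : (1:rat) / (2%:R * (2%:R - 1)) = 1 / 2 by field. rewrite Sq3 Sq2 Sq1. split; lra.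
- have -> : (1:rat) / (3%:R * (3%:R - 1)) = 1 / 6 by field. rewrite Sq4 Sq3 Sq2. split; lra.
- have -> : (1:rat) / (4%:R * (4%:R - 1)) = 1 / 12 by field. rewrite Sq5 Sq4 Sq3. split; lra.
- have -> : (1:rat) / (5%:R * (5%:R - 1)) = 1 / 20 by field. rewrite Sq6 Sq5 Sq4. split; lra.
- have -> : (1:rat) / (6%:R * (6%:R - 1)) = 1 / 30 by field. rewrite Sq7 Sq6 Sq5. split; lra.
- have -> : (1:rat) / (7%:R * (7%:R - 1)) = 1 / 42 by field. rewrite Sq8 Sq7 Sq6. split; lra.
have hm := ge8 k.
have e9 : (k.+4.+4.+1%:R : rat) = k.+4.+4%:R + 1 by rewrite natr1.
have hrec := rec k.+4.+3; rewrite e9 in hrec.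
have hl := lower k.
have hu := upper k.+3.
split.
- exact: (final1 _ _ _ _ hm (Sq_pos _) (Sq_pos _) hrec hl hu).
- exact: (final2 _ _ _ _ hm (Sq_pos _) (Sq_pos _) hrec hl).
Qed.

Theorem theorem4p1 (m : nat) (hm : (2 <= m)%N) :
  ((S m)%:Q ^+ 2 < (S m.+1)%:Q * (S m.-1)%:Q) /\
  ((S m.+1)%:Q * (S m.-1)%:Q < (1 + 1 / (m%:Q * (m%:Q - 1))) * (S m)%:Q ^+ 2).
Proof. rewrite -!pmulrn; exact: main' hm. Qed.
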